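(* For any finite multiset $C$ of vectors in $\mathbb{Z}^d$, a vector $c\in\mathbb{R}^d$ minimizing $\sum_{x\in C}\operatorname{dist}_\infty(x,c)$ can always be chosen from $\frac{1}{2}\mathbb{Z}^d$, i.e., with every coordinate an integer or a half-integer.
   Context: $\operatorname{dist}_\infty(x,y)=\max_{1\le i\le d}|x[i]-y[i]|$. *)

(* Defs.v *)
From HB Require Import structures.
From mathcomp Require Import all_boot all_order all_algebra.
From mathcomp Require Import reals.
Set Implicit Arguments. Unset Strict Implicit. Unset Printing Implicit Defensive.
Import Order.TTheory GRing.Theory Num.Theory.
Local Open Scope ring_scope.

Definition dist_inf (R : realType) (d : nat) (x y : 'I_d -> R) : R :=
  \big[Num.max/0]_(i < d) `|x i - y i|.

Definition intvec (R : realType) (d : nat) (x : 'I_d -> int) : 'I_d -> R :=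
  fun i => (x i)%:~R.

(* sum over the multiset C (a list, repetitions counted) of dist_inf(x, c) *)
Definition cost (R : realType) (d : nat) (C : seq ('I_d -> int)) (c : 'I_d -> R) : R :=
  \sum_(x <- C) dist_inf (intvec R x) c.

Definition half_integral (R : realType) (d : nat) (c : 'I_d -> R) : Prop :=
  forall i : 'I_d, exists k : int, c i = k%:~R / 2.

(* Main.v *)
Require Import Defs.
From HB Require Import structures.
From mathcomp Require Import all_boot all_order all_algebra.
From mathcomp Require Import reals.
From mathcomp Require Import ring lra zify.
Import Order.TTheory GRing.Theory Num.Theory.
Local Open Scope ring_scope.

Definition nf {R : realType} (a : R) : R := (Num.floor a)%:~R.
Definition fr {R : realType} (a : R) : R := a - nf a.
Definition gg {R : realType} (a : R) : R := Num.min (fr a) (1 - fr a).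
Definition pif {R : realType} (l a : R) : R :=
  if fr a < 1/2 then nf a + l * fr a
  else if fr a == 1/2 then a else nf a + 1 - l * (1 - fr a).

Lemma fr_itv {R : realType} (a : R) : 0 <= fr a < 1.
Proof.
have := floor_itv a; rewrite /fr /nf intrD => /andP[h1 h2].
apply/andP; split; lra.
Qed.

Lemma decE {R : realType} {k : int} {t : R} : 0 <= t < 1 ->
  nf (k%:~R + t) = k%:~R /\ fr (k%:~R + t) = t.
Proof.
move=> /andP[h1 h2]; rewrite /fr /nf.
have -> : Num.floor (k%:~R + t) = k.
  apply: floor_def; rewrite intrD; apply/andP; split; lra.
split => //; lra.
Qed.

Lemma aE {R : realType} (a : R) : a = (Num.floor a)%:~R + fr a.
Proof. rewrite /fr /nf; lra. Qed.
Lemma decomp {R : realType} (a : R) : exists k : int, exists t : R, 0 <= t < 1 /\ a = k%:~R + t.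
Proof. exists (Num.floor a), (fr a); split; [exact: fr_itv | exact: aE]. Qed.

Lemma negdec {R : realType} (k : int) {t : R} : 0 <= t < 1 ->
  (t = 0 /\ -(k%:~R + t) = (-k)%:~R + 0) \/
  (0 < t /\ 0 <= 1 - t < 1 /\ -(k%:~R + t) = (-k-1)%:~R + (1-t)).
Proof.
move=> /andP[h1 h2]; have [->|tn0] := eqVneq t 0.
  by left; split => //; rewrite mulrNz; lra.
right; have h3 : 0 < t by rewrite lt_def tn0 h1.
split => //; split; first by apply/andP; split; lra.
rewrite intrD mulrNz; lra.
Qed.

Lemma ggE {R : realType} (k : int) (t : R) : 0 <= t < 1 -> gg (k%:~R + t) = Num.min t (1 - t).
Proof. by move=> ht; rewrite /gg (decE ht).2. Qed.

Lemma min_half {R : realType} (t : R) : Num.min t (1 - t) = if t <= 1/2 then t else 1 - t.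
Proof.
case: ifP => h; [rewrite min_l // | rewrite min_r //]; first lra.
move/negbT: h; rewrite -ltNge => h; lra.
Qed.

Lemma gg_neg {R : realType} (a : R) : gg (- a) = gg a.
Proof.
have [k [t [ht ->]]] := decomp a.
have [[t0 e]|[h0 [h1 e]]] := negdec k ht; rewrite e.
  by rewrite t0 !ggE //= ?lexx ?ltr01.
rewrite ggE // ggE // !min_half.
case: ifP; case: ifP => // *; lra.
Qed.

Lemma gg_shift {R : realType} (a : R) (m : int) : gg (a + m%:~R) = gg a.
Proof.
have [k [t [ht ->]]] := decomp a.
have -> : k%:~R + t + m%:~R = (k + m)%:~R + t :> R by rewrite intrD; lra.
by rewrite !ggE.
Qed.

Lemma gg_small {R : realType} (t : R) : 0 <= t <= 1/2 -> gg t = t.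
Proof.
move=> /andP[h1 h2]; have -> : t = (0:int)%:~R + t by rewrite add0r.
rewrite ggE; last by apply/andP; split; lra.
by rewrite min_half add0r h2.
Qed.

Lemma gg_le_half {R : realType} (a : R) : gg a <= 1/2.
Proof.
have [k [t [ht ->]]] := decomp a.
rewrite ggE // min_half; case: ifP => // /negbT; rewrite -ltNge => h; lra.
Qed.

Lemma gg_ge0 {R : realType} (a : R) : 0 <= gg a.
Proof.
have [k [t [ht ->]]] := decomp a.
move: ht => /andP[h1 h2].
rewrite ggE ?h1 ?h2 // min_half; case: ifP => // /negbT; rewrite -ltNge => h; lra.
Qed.

Lemma pifE {R : realType} (l : R) (k : int) (t : R) : 0 <= t < 1 ->
  pif l (k%:~R + t) = if t < 1/2 then k%:~R + l * t
    else if t == 1/2 then k%:~R + t else k%:~R + 1 - l * (1 - t).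
Proof. by move=> ht; rewrite /pif (decE ht).1 (decE ht).2. Qed.

Lemma pif_neg {R : realType} (l a : R) : pif l (- a) = - pif l a.
Proof.
have [k [t [ht ->]]] := decomp a.
have [[t0 e]|[h0 [h1 e]]] := negdec k ht; rewrite e.
  rewrite !pifE //; last by apply/andP; split; lra.
  rewrite t0.
  have -> : (0 : R) < 1/2 by lra.
  by rewrite mulrNz; lra.
rewrite !pifE //.
move: ht => /andP[h2 h3].
have [hlt|hge] := ltP t (1/2).
  have -> : (1 - t < 1/2) = false by apply/negbTE; rewrite -leNgt; lra.
  have -> : (1 - t == 1/2) = false by apply/negbTE; apply/negP => /eqP; lra.
  rewrite intrD mulrNz; lra.
have [heq|hne] := eqVneq t (1/2).
  rewrite heq.
  have -> : (1 - 1/2 < 1/2 :> R) = false by apply/negbTE; rewrite -leNgt; lra.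
  have -> : (1 - 1/2 == 1/2 :> R) by apply/eqP; lra.
  rewrite ?ltxx ?eqxx intrD mulrNz; lra.
have hlt : 1/2 < t by rewrite lt_def hge andbT; apply: contra_neq hne => ->.
have -> : (1 - t < 1/2) by lra.
rewrite intrD mulrNz; lra.
Qed.

Lemma pif_shift {R : realType} (l a : R) (m : int) : pif l (a + m%:~R) = pif l a + m%:~R.
Proof.
have [k [t [ht ->]]] := decomp a.
have -> : k%:~R + t + m%:~R = (k + m)%:~R + t :> R by rewrite intrD; lra.
rewrite !pifE // intrD; case: ifP => _; first lra.
case: ifP => _; lra.
Qed.

Lemma pif_int {R : realType} (l : R) (m : int) : pif l m%:~R = m%:~R.
Proof.
have -> : m%:~R = m%:~R + 0 :> R by rewrite addr0.
rewrite pifE; last by apply/andP; split; lra.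
have -> : (0 : R) < 1/2 by lra.
lra.
Qed.

Lemma pif_one {R : realType} (a : R) : pif 1 a = a.
Proof.
have [k [t [ht ->]]] := decomp a.
rewrite pifE //; case: ifP => _; first lra.
case: ifP => _; lra.
Qed.
Definition okl {R : realType} (l a : R) := gg a < 1/2 -> l * gg a <= 1/2.

Lemma okE {R : realType} {l : R} {k : int} {t : R} : 0 <= t < 1 -> okl l (k%:~R + t) ->
  (t < 1/2 -> l * t <= 1/2) /\ (1/2 < t -> l * (1 - t) <= 1/2).
Proof.
move=> ht; rewrite /okl ggE // min_half => h; split => h1.
  by move: h; rewrite ifT; [apply | apply: ltW].
move: h; rewrite ifF; [apply; lra|].
by apply/negbTE; rewrite -ltNge.
Qed.

Lemma pif_bounds {R : realType} {l : R} {k : int} {t : R} : 0 <= l -> 0 <= t < 1 ->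
  okl l (k%:~R + t) -> k%:~R <= pif l (k%:~R + t) <= k%:~R + 1.
Proof.
move=> hl ht o; have [o1 o2] := okE ht o; rewrite pifE //.
move: ht => /andP[h1 h2].
case: ifP => c1.
  have o3 := o1 c1; apply/andP; split; nra.
case: ifP => c2; first by apply/andP; split; lra.
have c3 : 1/2 < t.
  by rewrite lt_def c2 /=; move/negbT: c1; rewrite -leNgt.
have o3 := o2 c3; apply/andP; split; nra.
Qed.

Lemma pif_mono_same {R : realType} (l : R) (k : int) (t t' : R) : 0 <= l -> 0 <= t < 1 ->
  0 <= t' < 1 -> okl l (k%:~R + t) -> okl l (k%:~R + t') -> t <= t' ->
  pif l (k%:~R + t) <= pif l (k%:~R + t').
Proof.
move=> hl ht ht' o o' htt; have [o1 o2] := okE ht o; have [o1' o2'] := okE ht' o'; rewrite !pifE //.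
move: ht ht' => /andP[h1 h2] /andP[h1' h2'].
have [c1|c1] := ltP t (1/2); have [c1'|c1'] := ltP t' (1/2).
- nra.
- have := o1 c1; case: ifP => [/eqP c2|c2]; first nra.
  have c3 : 1/2 < t' by rewrite lt_def c2 c1'.
  have := o2' c3; nra.
- lra.
- have [c2|c2] := eqVneq t (1/2); have [c2'|c2'] := eqVneq t' (1/2).
  + lra.
  + have c3 : 1/2 < t' by rewrite lt_def c2' c1'.
    have := o2' c3; nra.
  + lra.
  + have c3 : 1/2 < t' by rewrite lt_def c2' c1'.
    have c4 : 1/2 < t by rewrite lt_def c2 c1.
    nra.
Qed.

Lemma pif_mono {R : realType} (l a b : R) : 0 <= l -> okl l a -> okl l b -> a <= b ->
  pif l a <= pif l b.
Proof.
have [k [t [ht ->]]] := decomp a; have [k' [t' [ht' ->]]] := decomp b.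
move=> hl oa ob hab.
have hk : (k <= k')%R.
  rewrite -ltzD1 -(ltr_int R) intrD.
  move: ht ht' => /andP[h1 h2] /andP[h1' h2']; lra.
move: hk; rewrite le_eqVlt => /orP[/eqP ek|hk].
  rewrite -ek in ob hab *; apply: pif_mono_same => //; lra.
have := pif_bounds hl ht oa; have := pif_bounds hl ht' ob.
move: hk; rewrite -lezD1 -(ler_int R) intrD => hk.
move=> /andP[u2 _] /andP[_ u1]; move: hk; rewrite mulr1z => hk; lra.
Qed.
Lemma okl_gg {R : realType} (l a b : R) : gg a = gg b -> okl l a -> okl l b.
Proof. by rewrite /okl => ->. Qed.

Lemma gg_subint {R : realType} (m : int) (c : R) : gg (m%:~R - c) = gg c.
Proof. by rewrite addrC gg_shift gg_neg. Qed.

Lemma gg_abs {R : realType} (a : R) : gg `|a| = gg a.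
Proof. by case: (lerP 0 a) => h; [rewrite ger0_norm | rewrite ltr0_norm // gg_neg]. Qed.

Lemma pif0 {R : realType} (l : R) : pif l 0 = 0.
Proof. by have := pif_int l 0; rewrite mulr0z. Qed.

Lemma okl0 {R : realType} (l : R) : okl l 0.
Proof.
have -> : (0 : R) = (0:int)%:~R + 0 by rewrite mulr0z addr0.
by rewrite /okl ggE ?lexx ?ltr01 // min_half subr0 => _; rewrite ifT ?mulr0; lra.
Qed.

Lemma pif_ge0 {R : realType} (l a : R) : 0 <= l -> okl l a -> 0 <= a -> 0 <= pif l a.
Proof. move=> hl oa ha; rewrite -(pif0 l); exact: pif_mono (okl0 l) oa ha. Qed.

Lemma pif_abs {R : realType} (l a : R) : 0 <= l -> okl l a -> pif l `|a| = `|pif l a|.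
Proof.
move=> hl oa; case: (lerP 0 a) => h.
  by rewrite ger0_norm // ger0_norm // pif_ge0.
have oa' : okl l (- a) by apply: okl_gg oa; rewrite gg_neg.
have h' : 0 <= pif l (- a) by apply: pif_ge0 => //; lra.
rewrite ltr0_norm // ler0_norm; last by move: h'; rewrite pif_neg; lra.
by rewrite pif_neg.
Qed.

Lemma pif_sub {R : realType} (l : R) (m : int) (c : R) : pif l (m%:~R - c) = m%:~R - pif l c.
Proof. by rewrite addrC pif_shift pif_neg addrC. Qed.

Lemma pif_max {R : realType} (l u v : R) : 0 <= l -> okl l u -> okl l v ->
  pif l (Num.max u v) = Num.max (pif l u) (pif l v).
Proof.
move=> hl ou ov; case: (leP u v) => h.
  by rewrite !max_r // pif_mono.
by rewrite !max_l // pif_mono // ltW.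
Qed.

Lemma okl_max {R : realType} (l u v : R) : okl l u -> okl l v -> okl l (Num.max u v).
Proof. by move=> ou ov; case: (leP u v). Qed.

Lemma dist_pif {R : realType} (l : R) (d : nat) (x : 'I_d -> int) (c : 'I_d -> R) :
  0 <= l -> (forall i, okl l (c i)) ->
  dist_inf (intvec R x) (fun i => pif l (c i)) = pif l (dist_inf (intvec R x) c).
Proof.
move=> hl oc; rewrite /dist_inf.
suff : (\big[Num.max/0]_(i < d) `|intvec R x i - pif l (c i)| =
          pif l (\big[Num.max/0]_(i < d) `|intvec R x i - c i|)) /\
       okl l (\big[Num.max/0]_(i < d) `|intvec R x i - c i|) by case.
apply: (big_rec2 (fun y1 y2 => y1 = pif l y2 /\ okl l y2)).
  by rewrite pif0; split => //; exact: okl0.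
move=> i y1 y2 _ [-> o].
have oi : okl l `|intvec R x i - c i|.
  by apply: okl_gg (oc i); rewrite gg_abs /intvec gg_subint.
split; last exact: okl_max.
rewrite pif_max // pif_abs //; last by apply: okl_gg (oc i); rewrite /intvec gg_subint.
by rewrite /intvec pif_sub.
Qed.

Definition pA {R : realType} (a : R) : R :=
  if fr a < 1/2 then nf a else if fr a == 1/2 then a else nf a + 1.
Definition pB {R : realType} (a : R) : R :=
  if fr a < 1/2 then fr a else if fr a == 1/2 then 0 else - (1 - fr a).

Lemma pif_aff {R : realType} (l a : R) : pif l a = pA a + l * pB a.
Proof. rewrite /pif /pA /pB; case: ifP => _; first by []; case: ifP => _; lra. Qed.

Lemma cost_pif {R : realType} (l : R) (d : nat) (C : seq ('I_d -> int)) (c : 'I_d -> R) :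
  0 <= l -> (forall i, okl l (c i)) ->
  cost C (fun i => pif l (c i)) =
    \sum_(x <- C) pA (dist_inf (intvec R x) c) + l * \sum_(x <- C) pB (dist_inf (intvec R x) c).
Proof.
move=> hl oc; rewrite /cost mulr_sumr -big_split /=.
by apply: eq_bigr => x _; rewrite dist_pif // pif_aff.
Qed.
Definition bad {R : realType} {d : nat} (c : 'I_d -> R) (i : 'I_d) : bool :=
  (0 < gg (c i)) && (gg (c i) < 1/2).

Definition inbox {R : realType} {d : nat} (L U : int) (c : 'I_d -> R) : Prop :=
  forall i, L%:~R <= c i <= U%:~R.

Lemma seq_argmin {T : eqType} {R : realType} (s : seq T) (F : T -> R) (x0 : T) :
  x0 \in s -> exists y, y \in s /\ forall z, z \in s -> F y <= F z.
Proof.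
elim: s x0 => [//|a s IH] x0 _.
case: s IH => [|b s] IH.
  by exists a; split; [rewrite mem_head | move=> z; rewrite inE => /eqP ->].
have [y [hy hm]] := IH b (mem_head _ _).
case: (leP (F a) (F y)) => h.
  exists a; split; first exact: mem_head.
  move=> z; rewrite inE => /orP[/eqP ->//|hz].
  exact: le_trans h (hm z hz).
exists y; split; first by rewrite inE hy orbT.
move=> z; rewrite inE => /orP[/eqP ->|hz]; [exact: ltW | exact: hm].
Qed.

Lemma cost_ext {R : realType} (d : nat) (C : seq ('I_d -> int)) (c c' : 'I_d -> R) :
  (forall i, c i = c' i) -> cost C c = cost C c'.
Proof.
move=> e; rewrite /cost; apply: eq_bigr => x _; rewrite /dist_inf.
by apply: eq_bigr => i _; rewrite e.
Qed.

Lemma gg_pif {R : realType} (l a : R) : 0 <= l -> okl l a -> gg a < 1/2 ->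
  gg (pif l a) = l * gg a.
Proof.
have [k [t [ht ->]]] := decomp a.
move=> hl o hg; have [o1 o2] := okE ht o.
move: hg; rewrite ggE // min_half pifE //.
move: ht => /andP[h1 h2].
have [c1|c1] := ltP t (1/2).
  move=> _; rewrite ifT; last exact: ltW.
  rewrite addrC gg_shift gg_small //; have o3 := o1 c1; apply/andP; split; nra.
have [c2|c2] := eqVneq t (1/2); first by rewrite c2 ifT ?ltxx // lexx.
have c3 : 1/2 < t by rewrite lt_def c2 c1.
rewrite ifF; last by apply/negbTE; rewrite -ltNge.
move=> _; have -> : k%:~R + 1 - l * (1 - t) = - (l * (1 - t)) + (k + 1)%:~R.
  by rewrite intrD; lra.
rewrite gg_shift gg_neg gg_small //; have o3 := o2 c3; apply/andP; split; nra.
Qed.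

Lemma pif_half {R : realType} (l a : R) : gg a = 1/2 -> pif l a = a.
Proof.
have [k [t [ht ->]]] := decomp a.
rewrite ggE // min_half pifE //.
have [c2|c2] := eqVneq t (1/2); first by rewrite c2 ltxx.
move: ht => /andP[h1 h2].
case: ifP => _ h; exfalso; move: c2 => /eqP; lra.
Qed.

Lemma okl_int {R : realType} (l : R) (m : int) : okl l m%:~R.
Proof. apply: okl_gg (okl0 l); by rewrite -(subr0 m%:~R) gg_subint. Qed.

Lemma bad_pif {R : realType} (d : nat) (l : R) (c : 'I_d -> R) (j : 'I_d) :
  0 <= l -> okl l (c j) -> bad (fun i => pif l (c i)) j -> bad c j.
Proof.
move=> hl o; rewrite /bad.
have [h|h] := ltP (gg (c j)) (1/2).
  rewrite gg_pif // andbT => /andP[hp _].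
  have := gg_ge0 (c j); rewrite le_eqVlt => /orP[/eqP e|//].
  by move: hp; rewrite -e mulr0 ltxx.
have e : gg (c j) = 1/2 by apply/eqP; rewrite eq_le h gg_le_half.
by rewrite pif_half // e ltxx andbF.
Qed.
Lemma step_gen {R : realType} (d : nat) (L U : int) (C : seq ('I_d -> int)) (c : 'I_d -> R)
  (l : R) (i1 : 'I_d) : 0 <= l -> (forall j, okl l (c j)) -> inbox L U c ->
  gg (c i1) < 1/2 -> (l * gg (c i1) = 0) \/ (l * gg (c i1) = 1/2) ->
  inbox L U (fun j => pif l (c j)) /\ (forall j, bad (fun j => pif l (c j)) j -> bad c j) /\
  ~~ bad (fun j => pif l (c j)) i1.
Proof.
move=> hl ok hb hg hv; split; [|split].
- move=> j; have /andP[h1 h2] := hb j; apply/andP; split.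
    by rewrite -(pif_int l L); apply: pif_mono => //; exact: okl_int.
  by rewrite -(pif_int l U); apply: pif_mono => //; exact: okl_int.
- by move=> j; apply: bad_pif.
- rewrite /bad gg_pif //; case: hv => ->; first by rewrite ltxx.
  by rewrite ltxx andbF.
Qed.

Lemma round_step {R : realType} (d : nat) (L U : int) (C : seq ('I_d -> int)) (c : 'I_d -> R)
  (i0 : 'I_d) : inbox L U c -> bad c i0 ->
  exists c' : 'I_d -> R, inbox L U c' /\ cost C c' <= cost C c /\
    (forall j, bad c' j -> bad c j) /\ exists i1, bad c i1 /\ ~~ bad c' i1.
Proof.
move=> hb hb0.
have hin : i0 \in [seq i <- enum 'I_d | bad c i] by rewrite mem_filter hb0 mem_enum.
have [i1 [hi1 hmax]] := seq_argmin _ (fun i => - gg (c i)) _ hin.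
move: hi1; rewrite mem_filter mem_enum andbT => hb1.
have hmax' : forall j, bad c j -> gg (c j) <= gg (c i1).
  move=> j hj; have := hmax j; rewrite mem_filter mem_enum hj andbT => /(_ isT); lra.
have hb1' := hb1; move: hb1' => /andP[g0 g1].
set gm := gg (c i1) in g0 g1 hmax'.
pose Lam := 1 / (2 * gm).
have eLam : Lam * gm = 1/2 by rewrite /Lam; field; lra.
have Lam1 : 1 <= Lam by nra.
have okL : forall j, okl Lam (c j).
  move=> j; rewrite /okl => hj.
  have := gg_ge0 (c j); rewrite le_eqVlt => /orP[/eqP e|hp].
    by rewrite -e mulr0; lra.
  have := hmax' j; rewrite /bad hp hj => /(_ isT) h; nra.
have ok1 : forall j, okl 1 (c j) by move=> j; rewrite /okl => _; have := gg_le_half (c j); lra.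
have ok0 : forall j, okl 0 (c j) by move=> j; rewrite /okl mul0r => _; lra.
have e1 := cost_pif 1 _ C _ ler01 ok1.
have e0 := cost_pif 0 _ C _ (lexx 0) ok0.
have eL := cost_pif Lam _ C _ (le_trans ler01 Lam1) okL.
have ec : cost C (fun i => pif 1 (c i)) = cost C c by apply: cost_ext => i; rewrite pif_one.
rewrite ec in e1.
set SA := \sum_(x <- C) pA (dist_inf (intvec R x) c) in e1 e0 eL.
set SB := \sum_(x <- C) pB (dist_inf (intvec R x) c) in e1 e0 eL.
have [hSB|hSB] := leP 0 SB.
  have [h1 [h2 h3]] := step_gen _ _ _ C _ _ _ (lexx 0) ok0 hb g1 (or_introl (mul0r gm)).
  exists (fun j => pif 0 (c j)); split => //; split; first by rewrite e0 e1; lra.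
  split => //; by exists i1.
have [h1 [h2 h3]] := step_gen _ _ _ C _ _ _ (le_trans ler01 Lam1) okL hb g1 (or_intror eLam).
exists (fun j => pif Lam (c j)); split => //; split; first by rewrite eL e1; nra.
split => //; by exists i1.
Qed.
Lemma round_all {R : realType} (d : nat) (L U : int) (C : seq ('I_d -> int)) (n : nat) :
  forall c : 'I_d -> R, (#|[set i | bad c i]| < n)%N -> inbox L U c ->
  exists c' : 'I_d -> R, inbox L U c' /\ (forall i, ~~ bad c' i) /\ cost C c' <= cost C c.
Proof.
elim: n => [//|n IH] c hn hb.
have [/existsP [i0 hi0]|hno] := boolP [exists i, bad c i]; last first.
  exists c; split => //; split => //.
  by move=> i; apply: contra hno => h; apply/existsP; exists i.
have [c' [hb' [hc [hsub [i1 [hi1 hn1]]]]]] := round_step _ _ _ C _ _ hb hi0.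
have hpr : [set i | bad c' i] \proper [set i | bad c i].
  apply/properP; split.
    by apply/subsetP => j; rewrite !inE; apply: hsub.
  by exists i1; rewrite inE.
have := proper_card hpr => hlt.
have [c'' [h1 [h2 h3]]] := IH c' (leq_trans hlt hn) hb'.
exists c''; split => //; split => //; exact: le_trans h3 hc.
Qed.

Lemma half_of_notbad {R : realType} (d : nat) (c : 'I_d -> R) :
  (forall i, ~~ bad c i) -> half_integral c.
Proof.
move=> hnb i; have := hnb i; rewrite /bad.
have [k [t [ht ->]]] := decomp (c i).
rewrite ggE // min_half; move: ht => /andP[h1 h2].
case: ifP => ht.
  have [e|ne] := eqVneq t 0.
    by move=> _; exists (k + k); rewrite e intrD; lra.
  have tp : 0 < t by rewrite lt_def ne h1.
  rewrite tp /= -leNgt => h3; exists (k + k + 1); rewrite !intrD; lra.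
move/negbT: ht; rewrite -ltNge => ht.
have tp : 0 < 1 - t by lra.
rewrite tp /= -leNgt => h3; exists (k + k + 1); rewrite !intrD; lra.
Qed.

Lemma clamp_le {R : realType} (L U x c : R) : L <= x <= U ->
  `|x - Num.max L (Num.min c U)| <= `|x - c|.
Proof.
move=> /andP[h1 h2].
have [h|h] := leP c U.
  have [h'|h'] := leP L c; first by [].
  rewrite !ger0_norm; lra.
have [h'|h'] := leP L U.
  rewrite !ler0_norm; lra.
lra.
Qed.

Lemma bigmax_mono {R : realType} (d : nat) (F G : 'I_d -> R) :
  (forall i, F i <= G i) -> \big[Num.max/0]_(i < d) F i <= \big[Num.max/0]_(i < d) G i.
Proof.
move=> h; apply: (big_rec2 (fun y1 y2 => y1 <= y2)) => // i y1 y2 _ hy.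
by rewrite ge_max !le_max (h i) /= hy orbT.
Qed.
Lemma bound_exists (d : nat) (C : seq ('I_d -> int)) :
  exists M : nat, all (fun x => [forall i, (`|x i| <= M)%N]) C.
Proof.
elim: C => [|a C [M hM]]; first by exists 0%N.
exists (maxn M (\max_(i < d) `|a i|)%N); apply/andP; split.
  apply/forallP => i; apply: leq_trans (leq_maxr M _).
  have := @leq_bigmax _ (fun i => `|a i|%N) i; by [].
apply: sub_all hM => x /forallP h; apply/forallP => i.
exact: leq_trans (h i) (leq_maxl _ _).
Qed.

Lemma sum_le_all {R : realType} {T : Type} (P : pred T) (C : seq T) (F G : T -> R) :
  all P C -> (forall x, P x -> F x <= G x) -> \sum_(x <- C) F x <= \sum_(x <- C) G x.
Proof.
move=> hP h; elim: C hP => [|a C IH] /=; first by rewrite !big_nil.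
move=> /andP[ha hC]; rewrite !big_cons; apply: lerD; [exact: h | exact: IH].
Qed.
Theorem claim8 (R : realType) (d : nat) (C : seq ('I_d -> int)) :
  exists c : 'I_d -> R,
    half_integral c /\ (forall c' : 'I_d -> R, cost C c <= cost C c').
Proof.
have [M hM] := bound_exists _ C.
pose U : int := M%:Z.
pose L : int := - U.
have hxb : forall x : 'I_d -> int, [forall i, (`|x i| <= M)%N] -> forall i, (L%:~R : R) <= intvec R x i <= U%:~R.
  move=> x /forallP hx i; have h3 := hx i.
  rewrite /intvec !ler_int /L /U; lia.
pose N := (4 * M).+1.
pose hv (f : {ffun 'I_d -> 'I_N}) : 'I_d -> R := fun i => (((f i : nat)%:Z - (U + U))%:~R) / 2.
have [f0 [_ hmin]] := seq_argmin (enum {ffun 'I_d -> 'I_N}) (fun f => cost C (hv f))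
   [ffun _ => ord0] (mem_enum _ _).
exists (hv f0); split.
  by move=> i; exists ((f0 i : nat)%:Z - (U + U)).
move=> c'.
pose c1 := fun i => Num.max (L%:~R : R) (Num.min (c' i) U%:~R).
have hU : (L%:~R : R) <= U%:~R by rewrite ler_int /L /U; lia.
have hc1 : cost C c1 <= cost C c'.
  rewrite /cost; apply: (@sum_le_all R _ _ C (fun x => dist_inf (intvec R x) c1) (fun x => dist_inf (intvec R x) c') hM) => x hx.
  rewrite /dist_inf; apply: bigmax_mono => i; apply: clamp_le; exact: hxb.
have hb1 : inbox L U c1.
  move=> i; apply/andP; split; first by rewrite le_max lexx.
  by rewrite ge_max hU ge_min lexx orbT.
have [c2 [hb2 [hnb hc2]]] := round_all _ _ _ C _ c1 (ltnSn _) hb1.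
have hh := half_of_notbad _ _ hnb.
have [k hk] := fin_all_exists hh.
have kb : forall i, (L + L <= k i <= U + U)%R.
  move=> i; have := hb2 i; rewrite hk => /andP[b1 b2].
  rewrite -!(ler_int R) !intrD; apply/andP; split; lra.
pose f := [ffun i => inord (absz (k i + (U + U))) : 'I_N].
have ef : forall i, c2 i = hv f i.
  move=> i; rewrite hk /hv ffunE inordK; last by have := kb i; rewrite /L /N /U; lia.
  have -> : ((absz (k i + (U + U)))%:Z - (U + U))%R = k i.
    by have := kb i; rewrite /L /U; lia.
  by [].
have := hmin f (mem_enum _ _); rewrite -(cost_ext _ C _ _ ef) => h.
exact: le_trans h (le_trans hc2 hc1).
Qed.
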